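(* Let $n=2$, $f\in\mathcal{E}$, and let $\widetilde f$ be a harmonic extension of $f$. Then $$\|\widetilde\nabla^{1,1}\widetilde f\|^2:=\widetilde g^{I\bar L}\widetilde g^{K\bar J}\,(\partial_{\zeta_I}\partial_{\bar\zeta_J}\widetilde f)\,(\partial_{\zeta_K}\partial_{\bar\zeta_L}\widetilde f)$$ vanishes identically on $\mathcal{N}$.
   Context: For $n=2$: on $\mathbb{C}^{3}$ with coordinates $\zeta=(\zeta_0,\zeta_1,\zeta_2)$ put $L(\zeta)=|\zeta_0|^2-|\zeta_1|^2-|\zeta_2|^2$, $\mathcal{N}=\{\zeta\ne0:L=0\}$, $\Delta=\partial_{\zeta_0}\partial_{\bar\zeta_0}-\partial_{\zeta_1}\partial_{\bar\zeta_1}-\partial_{\zeta_2}\partial_{\bar\zeta_2}$, $\widetilde g^{K\bar L}=\mathrm{diag}(1,-1,-1)$ (summation over repeated indices). $\mathcal{E}=\{f\in C^\infty(\mathcal{N},\mathbb{R}):f(\lambda\zeta)=f(\zeta)\ \forall\lambda\in\mathbb{C}^*\}$. A harmonic extension of $f\in\mathcal{E}$ is a smooth $\widetilde f$ on $\mathbb{C}^{3}\setminus\{0\}$ with $\widetilde f(\lambda\zeta)=\widetilde f(\zeta)$, $\widetilde f|_{\mathcal{N}}=f$, and $\Delta\widetilde f=L\,h$ for some smooth $h$. *)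

(* Defs.v *)
From HB Require Import structures.
From mathcomp Require Import all_boot all_order all_algebra.
From mathcomp Require Import all_classical all_reals all_analysis.
From mathcomp Require Import complex.
Set Implicit Arguments. Unset Strict Implicit. Unset Printing Implicit Defensive.
Import Order.TTheory GRing.Theory Num.Theory.
Import numFieldNormedType.Exports.
Local Open Scope ring_scope.

(* A point zeta of C^3 is encoded by its 6 real coordinates x : 'rV[R]_(3+3):
   x (re I) = Re zeta_I,  x (im I) = Im zeta_I   (I : 'I_3). *)
Section C3.
Variable R : realType.
Notation V := 'rV[R]_(3 + 3).

Definition re (I : 'I_3) : 'I_(3 + 3) := lshift 3 I.
Definition im (I : 'I_3) : 'I_(3 + 3) := rshift 3 I.

Definition zeta (x : V) (I : 'I_3) : R[i] := Complex (x ord0 (re I)) (x ord0 (im I)).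

Definition of_zeta (z : 'I_3 -> R[i]) : V :=
  \row_k match fintype.split k with
         | inl i0 => complex.Re (z i0)
         | inr i0 => complex.Im (z i0)
         end.

Definition cscale (l : R[i]) (x : V) : V := of_zeta (fun I => l * zeta x I).

Definition ebasis (k : 'I_(3 + 3)) : V := delta_mx 0 k.
Definition pd (k : 'I_(3 + 3)) (f : V -> R) : V -> R := fun x => 'D_(ebasis k) f x.

Definition iter_pd (ks : seq 'I_(3 + 3)) (f : V -> R) : V -> R :=
  foldr pd f ks.

Definition smooth (f : V -> R) : Prop :=
  forall (ks : seq 'I_(3 + 3)) (x : V), x != 0 ->
    (forall k, derivable (iter_pd ks f) x (ebasis k)) /\
    {for x, continuous (iter_pd ks f)}.

Definition Lform (x : V) : R :=
  let sq I := x ord0 (re I) ^+ 2 + x ord0 (im I) ^+ 2 in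
  sq 0 - sq 1 - sq 2.

Definition Ncone (x : V) : Prop := x != 0 /\ Lform x = 0.

(* d_{zeta_I} d_{bar zeta_J} f for real-valued f, written out in real
   coordinates: d_{zeta_I} = (d_{x_I} - i d_{y_I})/2,
   d_{bar zeta_J} = (d_{x_J} + i d_{y_J})/2. *)
Definition ddbar (I J : 'I_3) (f : V -> R) (x : V) : R[i] :=
  Complex ((pd (re I) (pd (re J) f) x + pd (im I) (pd (im J) f) x) / 4)
          ((pd (re I) (pd (im J) f) x - pd (im I) (pd (re J) f) x) / 4).

Definition Delta (f : V -> R) (x : V) : R[i] :=
  ddbar 0 0 f x - ddbar 1 1 f x - ddbar 2 2 f x.

Definition ginv (K L : 'I_3) : R[i] :=
  if K == L then (if K == 0 then 1 else -1) else 0.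

Definition hess11_norm2 (f : V -> R) (x : V) : R[i] :=
  \sum_(I < 3) \sum_(J < 3) \sum_(K < 3) \sum_(L < 3)
    ginv I L * ginv K J * ddbar I J f x * ddbar K L f x.

Definition homog0 (f : V -> R) : Prop :=
  forall (l : R[i]) (x : V), l != 0 -> f (cscale l x) = f x.

(* f in E: smooth real function on N (i.e. the restriction of a smooth
   function on the open set C^3\{0} in which N is a closed embedded
   submanifold), invariant under C^* on N. *)
Definition in_E (f : V -> R) : Prop :=
  (exists F : V -> R, smooth F /\ forall x, Ncone x -> F x = f x) /\
  (forall (l : R[i]) (x : V), l != 0 -> Ncone x -> f (cscale l x) = f x).

Definition harmonic_extension (f ft : V -> R) : Prop :=
  [/\ smooth ft, homog0 ft,
      (forall x, Ncone x -> ft x = f x) &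
      exists h : V -> R, smooth h /\
        forall x, x != 0 -> Delta ft x = Complex (Lform x * h x) 0].
End C3.

(* Main.v *)
Require Import Defs.
From HB Require Import structures.
From mathcomp Require Import all_boot all_order all_algebra.
From mathcomp Require Import all_classical all_reals all_analysis.
From mathcomp Require Import complex.
From mathcomp Require Import ring lra.
Import Order.TTheory GRing.Theory Num.Theory.
Import numFieldNormedType.Exports.
Local Open Scope ring_scope.
Local Open Scope classical_set_scope.
Lemma mvt_bound (R : realType) (phi dphi : R -> R) (T c eps : R) :
  (forall s : R, `|s| <= `|T| -> is_derive s 1 phi (dphi s)) ->
  (forall s : R, `|s| <= `|T| -> `|dphi s - c| <= eps) ->
  `|phi T - phi 0 - c * T| <= eps * `|T|.
Proof.
move=> hd hb.
have cont : forall a b, a <= b -> (forall s, a <= s <= b -> `|s| <= `|T|) ->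
    {within `[a, b], continuous phi}.
  move=> a b _ hab; apply: continuous_in_subspaceT => s.
  rewrite inE /= in_itv /= => /hab /hd [dv _].
  exact/differentiable_continuous/derivable1_diffP.
have [T0|T0] := leP 0 T.
  have [xi xiin ->] : exists2 xi, xi \in `[0, T]%R & phi T - phi 0 = dphi xi * (T - 0).
    apply: (MVT_segment (f:=phi)) => //.
      move=> s; rewrite in_itv /= => /andP[s0 sT]; apply: hd.
      by rewrite !ger0_norm // ?ltW.
    apply: cont => // s /andP[s0 sT]; by rewrite !ger0_norm.
  move: xiin; rewrite in_itv /= => /andP[x0 xT].
  rewrite subr0 -mulrBl normrM ler_wpM2r //; apply: hb.
  by rewrite !ger0_norm.
have [xi xiin E] : exists2 xi, xi \in `[T, 0]%R & phi 0 - phi T = dphi xi * (0 - T).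
  apply: MVT_segment; first exact: ltW.
    move=> s; rewrite in_itv /= => /andP[s0 sT]; apply: hd.
    by rewrite !ltr0_norm // ?lerN2 ?ltW.
  apply: cont; first exact: ltW.
  move=> s /andP[s0 sT]; rewrite !ler0_norm ?lerN2 // ltW //.
move: xiin; rewrite in_itv /= => /andP[x0 xT].
have -> : phi T - phi 0 - c * T = (dphi xi - c) * T.
  by apply/eqP; rewrite -subr_eq0; apply/eqP; move: E; rewrite sub0r => E; lra.
rewrite normrM ler_wpM2r //; apply: hb.
by rewrite !ler0_norm ?lerN2 // ltW.
Qed.
Lemma line_derive (R : realType) (V : normedModType R) (g : V -> R) (z e : V) (s : R) :
  derivable g (z + s *: e) e ->
  is_derive s 1 (fun t : R => g (z + t *: e)) ('D_e g (z + s *: e)).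
Proof.
move=> hd.
have E : forall h : R, z + (h *: 1 + s) *: e = h *: e + (z + s *: e).
  by move=> h; rewrite scaler1 scalerDl addrCA addrA.
split.
  rewrite /derivable; move: hd; rewrite /derivable.
  match goal with |- cvg (?F @ _) -> cvg (?G @ _) => have -> // : G = F end.
  by apply/funext => h /=; rewrite /shift /= E.
rewrite /derive.
match goal with |- lim (?G @ _) = lim (?F @ _) => have -> // : G = F end.
by apply/funext => h /=; rewrite /shift /= E.
Qed.

Lemma partials_derive (R : realType) (V : normedModType R) n (g : V -> R) (x : V)
  (e : 'I_n -> V) (a : 'I_n -> R) :
  (\forall y \near x, forall k, derivable g y (e k)) ->
  (forall k, {for x, continuous (fun y => 'D_(e k) g y)}) ->
  is_derive x (\sum_k a k *: e k) g (\sum_k a k * 'D_(e k) g x).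
Proof.
move=> hder hcont.
set c := \sum_k a k * 'D_(e k) g x.
set v := \sum_k a k *: e k.
suff hc : (fun h : R => h^-1 *: ((g \o shift x) (h *: v) - g x)) @ 0^' --> c.
  by split; [exact: (cvgP _ hc) | exact: cvg_lim hc].
apply/cvgrPdist_le => eps eps0.
set S := \sum_k `|a k|.
set M := \sum_k `|a k| * `|e k|.
have S0 : 0 <= S by apply: sumr_ge0 => k _.
have M0 : 0 <= M by apply: sumr_ge0 => k _; rewrite mulr_ge0.
set eps' := eps / (S + 1).
have eps'0 : 0 < eps' by rewrite divr_gt0 // ltr_wpDl.
have hk : \forall y \near x, forall k, `|'D_(e k) g x - 'D_(e k) g y| <= eps'.
  apply: filter_forall => k; have := hcont k.
  by move/cvgrPdist_le => /(_ eps' eps'0).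
have hn : \forall y \near x, (forall k, derivable g y (e k)) /\
     (forall k, `|'D_(e k) g y - 'D_(e k) g x| <= eps').
  move: hder hk; apply: filterS2 => y H1 H2; split => // k.
  by rewrite distrC; apply: H2.
move/nbhs_ballP: hn => [r /= r0 hball].
set del := r / (2 * M + 1).
have del0 : 0 < del by rewrite divr_gt0 // ltr_wpDl // mulr_ge0.
rewrite near_withinE /=; near=> h => hN0.
have hsmall : `|h| < del.
  near: h; apply/nbhs_ballP; exists del => //= t; rewrite /ball /= sub0r normrN.
  done.
have hr : `|h| * (2 * M + 1) < r.
  by rewrite -ltr_pdivlMr // ltr_wpDl // mulr_ge0.
pose w (k : nat) : V := \sum_(j < n | (j < k)%N) a j *: e j.
pose z (k : nat) := x + h *: w k.
have w0 : w 0%N = 0 by rewrite /w big_pred0.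
have wn : w n = v by rewrite /w; apply: eq_bigl => j; rewrite ltn_ord.
have wS : forall k : 'I_n, w k.+1 = w k + a k *: e k.
  move=> k; rewrite /w (bigD1 k) /= ?ltnS ?leqnn // addrC; congr (_ + _).
  by apply: eq_bigl => j; rewrite ltnS ltn_neqAle andbC.
have wle : forall k, `|w k| <= M.
  move=> k; rewrite /w; apply: le_trans (ler_norm_sum _ _ _) _.
  apply: (@le_trans _ _ (\sum_(j < n | (j < k)%N) `|a j| * `|e j|)).
    by apply: ler_sum => j _; rewrite normrZ.
  by rewrite /M [X in _ <= X](bigID (fun j : 'I_n => (j < k)%N)) /= lerDl sumr_ge0 // => j _; rewrite mulr_ge0.
have Mk : forall k, `|a k| * `|e k| <= M.
  by move=> k; rewrite /M (bigD1 k) //= lerDl sumr_ge0 // => j _; rewrite mulr_ge0.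
have Pb : forall (k : 'I_n) s, `|s| <= `|h * a k| -> ball x r (z k + s *: e k).
  move=> k s hs.
  rewrite -ball_normE /ball_ /=.
  have -> : x - (z k + s *: e k) = - (h *: w k + s *: e k).
    by rewrite /z opprD !opprD !addrA subrr sub0r.
  rewrite normrN; apply: le_lt_trans (ler_normD _ _) _; rewrite !normrZ.
  have h1 : `|h| * `|w k| <= `|h| * M by rewrite ler_wpM2l.
  have h2 : `|s| * `|e k| <= `|h| * M.
    apply: le_trans (_ : `|h * a k| * `|e k| <= _); first by rewrite ler_wpM2r.
    by rewrite normrM -mulrA ler_wpM2l.
  have h3 : 0 <= `|h| * M by rewrite mulr_ge0.
  nra.
have step : forall k : 'I_n,
    `|g (z k.+1) - g (z k) - 'D_(e k) g x * (h * a k)| <= eps' * `|h * a k|.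
  move=> k.
  have -> : z k.+1 = z k + (h * a k) *: e k by rewrite /z wS scalerDr addrA scalerA.
  have H := @mvt_bound R (fun s => g (z k + s *: e k))
    (fun s => 'D_(e k) g (z k + s *: e k)) (h * a k) ('D_(e k) g x) eps'.
  rewrite /= scale0r addr0 in H; apply: H => s hs.
  - have P := Pb k s hs.
    have [d1 _] := hball _ P; apply: line_derive; exact: d1 k.
  - have P := Pb k s hs.
    have [_ d2] := hball _ P; exact: d2 k.
have tele : g (x + h *: v) - g x = \sum_(k < n) (g (z k.+1) - g (z k)).
  rewrite -(big_mkord xpredT (fun k => g (z k.+1) - g (z k))) telescope_sumr //.
  by rewrite /z wn w0 scaler0 addr0.
have csum : h * c = \sum_(k < n) 'D_(e k) g x * (h * a k).
  by rewrite /c mulr_sumr; apply: eq_bigr => k _; ring.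
have bound : `|g (x + h *: v) - g x - h * c| <= eps' * `|h| * S.
  rewrite tele csum -sumrB; apply: le_trans (ler_norm_sum _ _ _) _.
  rewrite /S mulr_sumr; apply: ler_sum => k _.
  by rewrite (le_trans (step k)) // normrM mulrA.
rewrite /= /shift /= [h *: v + x]addrC.
have sc : forall y : R, h^-1 *: y = h^-1 * y by [].
have -> : c - h^-1 *: (g (x + h *: v) - g x) = - h^-1 * (g (x + h *: v) - g x - h * c).
  by rewrite sc; field.
rewrite normrM normrN normfV.
have hp : 0 < `|h| by rewrite normr_gt0.
rewrite -ler_pdivlMl ?invr_gt0 // invrK.
apply: (le_trans bound).
have e1 : eps' * S <= eps.
  rewrite /eps' mulrAC ler_pdivrMr ?ltr_wpDl //. nra.
nra.
Unshelve. all: by end_near. Qed.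
Lemma exp_derive (R : realType) (V : normedModType R) (G : V -> R) (x v : V)
  (phi : R -> R) :
  (\forall t \near (0:R), G (x + t *: v) = G x + t * phi t) ->
  {for 0, continuous phi} -> is_derive x v G (phi 0).
Proof.
move=> hG hphi.
have hc : (fun h : R => h^-1 *: ((G \o shift x) (h *: v) - G x)) @ 0^' --> phi 0.
  move/continuous_withinNx : hphi; apply: cvg_trans; apply: near_eq_cvg.
  rewrite near_withinE; near=> t => t0 /=.
  have -> : G (t *: v + x) = G x + t * phi t by rewrite addrC; near: t.
  have sc : forall y : R, t^-1 *: y = t^-1 * y by [].
  by rewrite sc; field.
by split; [exact: (cvgP _ hc) | exact: cvg_lim hc].
Unshelve. all: by end_near. Qed.

Lemma line_cvg (R : realType) (V : normedModType R) (x v : V) :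
  (fun t : R => x + t *: v) @ (0:R) --> x.
Proof.
suff : (fun t : R => x + t *: v) @ (0:R) --> x + (0:R) *: v by rewrite scale0r addr0.
apply: cvgD; first exact: cvg_cst.
exact: scalel_continuous.
Qed.

Lemma near_line (R : realType) (V : normedModType R) (x v : V) (P : set V) :
  (\forall y \near x, P y) -> \forall t \near (0:R), P (x + t *: v).
Proof. move=> hP; exact: (@line_cvg _ _ x v _ hP). Qed.

Lemma cont_line (R : realType) (V : normedModType R) (G : V -> R) (x v : V) :
  {for x, continuous G} -> {for 0, continuous (fun t : R => G (x + t *: v))}.
Proof.
move=> hG; have H := cvg_comp _ _ (@line_cvg _ _ x v) hG.
move=> P /=; rewrite scale0r addr0 => hP; exact: H hP.
Qed.
Local Open Scope complex_scope.
Set Implicit Arguments. Unset Strict Implicit.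

Section Setting.
Variable R : realType.
Local Notation V := 'rV[R]_(3 + 3).

Definition Jm (y : V) : V := \row_k match fintype.split k with
   | inl i0 => - y ord0 (im i0) | inr i0 => y ord0 (re i0) end.

Lemma row_re (a b : 'I_3 -> R) (I : 'I_3) :
  (\row_k match fintype.split k with inl i0 => a i0 | inr i0 => b i0 end : V) ord0 (re I) = a I.
Proof. by rewrite mxE /re -[lshift 3 I]/(unsplit (inl I)) unsplitK. Qed.

Lemma row_im (a b : 'I_3 -> R) (I : 'I_3) :
  (\row_k match fintype.split k with inl i0 => a i0 | inr i0 => b i0 end : V) ord0 (im I) = b I.
Proof. by rewrite mxE /im -[rshift 3 I]/(unsplit (inr I)) unsplitK. Qed.

Lemma rowV_eq (u w : V) : (forall I, u ord0 (re I) = w ord0 (re I)) ->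
  (forall I, u ord0 (im I) = w ord0 (im I)) -> u = w.
Proof.
move=> h1 h2; apply/rowP => k; rewrite -(splitK k).
by case: (fintype.split k) => i0 /=; [apply: h1 | apply: h2].
Qed.

Lemma Jm_re (y : V) (I : 'I_3) : Jm y ord0 (re I) = - y ord0 (im I).
Proof. exact: (row_re (fun i0 => - y ord0 (im i0)) (fun i0 => y ord0 (re i0))). Qed.
Lemma Jm_im (y : V) (I : 'I_3) : Jm y ord0 (im I) = y ord0 (re I).
Proof. exact: (row_im (fun i0 => - y ord0 (im i0)) (fun i0 => y ord0 (re i0))). Qed.
Lemma ofz_re (z : 'I_3 -> R[i]) (I : 'I_3) : of_zeta z ord0 (re I) = complex.Re (z I).
Proof. exact: (row_re (fun i0 => complex.Re (z i0)) (fun i0 => complex.Im (z i0))). Qed.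
Lemma ofz_im (z : 'I_3 -> R[i]) (I : 'I_3) : of_zeta z ord0 (im I) = complex.Im (z I).
Proof. exact: (row_im (fun i0 => complex.Re (z i0)) (fun i0 => complex.Im (z i0))). Qed.

Lemma cs_real (s : R) (y : V) : Defs.cscale (Complex s 0) y = s *: y.
Proof.
apply: rowV_eq => I; rewrite /Defs.cscale ?ofz_re ?ofz_im mxE /zeta /=; ring.
Qed.

Lemma cs_rot (t : R) (y : V) : Defs.cscale (Complex 1 t) y = y + t *: Jm y.
Proof.
apply: rowV_eq => I; rewrite /Defs.cscale ?ofz_re ?ofz_im [X in _ = X]mxE [X in _ = _ + X]mxE ?Jm_re ?Jm_im /zeta /=; ring.
Qed.

Lemma Jm_lin (a : R) (u w : V) : Jm (a *: u + w) = a *: Jm u + Jm w.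
Proof.
apply: rowV_eq => I; rewrite ?Jm_re ?Jm_im [X in _ = X]mxE [X in _ = X + _]mxE ?Jm_re ?Jm_im !mxE; ring.
Qed.

Lemma ebE (k j : 'I_(3 + 3)) : ebasis R k ord0 j = (k == j)%:R.
Proof. by rewrite /ebasis mxE [j == k]eq_sym. Qed.

Lemma Jm_e_re (I : 'I_3) : Jm (ebasis R (re I)) = ebasis R (im I).
Proof.
apply: rowV_eq => J; rewrite ?Jm_re ?Jm_im !ebE /re /im ?eq_lrshift ?eq_rlshift ?eq_lshift ?eq_rshift;
  by rewrite ?oppr0.
Qed.

Lemma Jm_e_im (I : 'I_3) : Jm (ebasis R (im I)) = - ebasis R (re I).
Proof.
apply: rowV_eq => J; rewrite ?Jm_re ?Jm_im [X in _ = X]mxE !ebE /re /im ?eq_lrshift ?eq_rlshift ?eq_lshift ?eq_rshift;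
  by rewrite ?oppr0.
Qed.

Definition C1 (G : V -> R) := forall y : V, y != 0 ->
  [/\ forall k, derivable G y (ebasis R k), forall k, {for y, continuous (pd k G)}
     & {for y, continuous G}].

Lemma smooth_C1 F : smooth F -> C1 F.
Proof.
move=> sF y y0; have [d c] := sF [::] y y0; split => // k.
by have [_ c'] := sF [:: k] y y0.
Qed.

Lemma smooth_C1pd F b : smooth F -> C1 (pd b F).
Proof.
move=> sF y y0; have [d c] := sF [:: b] y y0; split => // k.
by have [_ c'] := sF [:: k; b] y y0.
Qed.

Lemma nonzero_near (x : V) : x != 0 -> \forall y \near x, y != 0.
Proof.
move=> x0; apply/nbhs_ballP; exists `|x|; first by rewrite /= normr_gt0.
move=> y; rewrite -ball_normE /= => hxy; apply/eqP => y0.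
by rewrite y0 subr0 ltxx in hxy.
Qed.

Lemma C1_derive G (hG : C1 G) (y : V) (y0 : y != 0) (v : V) :
  is_derive y v G (\sum_k v ord0 k * pd k G y).
Proof.
rewrite {1}(row_sum_delta v).
apply: (@partials_derive R V (3 + 3) G y (ebasis R) (fun k => v ord0 k)).
- by move: (@nonzero_near y y0); apply: filterS => z z0; case: (hG z z0).
- by case: (hG y y0).
Qed.

Lemma C1_D G (hG : C1 G) (y : V) (y0 : y != 0) (v : V) :
  'D_v G y = \sum_k v ord0 k * pd k G y.
Proof. by case: (C1_derive hG y0 v). Qed.

Lemma Dlin G (hG : C1 G) (y : V) (y0 : y != 0) (c : R) (u w : V) :
  'D_(c *: u + w) G y = c * 'D_u G y + 'D_w G y.
Proof.
rewrite !(C1_D hG y0) mulr_sumr -big_split; apply: eq_bigr => k _.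
rewrite !mxE /=; ring.
Qed.

Lemma Dopp G (hG : C1 G) (y : V) (y0 : y != 0) (u : V) :
  'D_(- u) G y = - 'D_u G y.
Proof.
rewrite !(C1_D hG y0) -sumrN; apply: eq_bigr => k _.
rewrite !mxE; ring.
Qed.

Lemma D_inv (F : V -> R) (M : V -> V)
  (hM : forall (h : R) u w, M (h *: u + w) = h *: M u + M w)
  (hF : forall z, F (M z) = F z) (y e : V) :
  'D_e F y = 'D_(M e) F (M y).
Proof.
rewrite /derive.
match goal with |- lim (?G @ _) = lim (?H @ _) => have -> // : G = H end.
by apply/funext => h /=; rewrite /shift /= -hM !hF.
Qed.

Lemma cplx_neq0 (a b : R) : a != 0 -> Complex a b != 0.
Proof. by move=> a0; apply: contra a0 => /eqP [] ->. Qed.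

Lemma near_small : \forall t \near (0:R), `|t| < 1.
Proof.
apply/nbhs_ballP; exists 1 => //= t; rewrite -ball_normE /= sub0r normrN; done.
Qed.

Variable F : V -> R.
Hypothesis sF : smooth F.
Hypothesis hF : homog0 F.

Lemma F_real (s : R) z : s != 0 -> F (s *: z) = F z.
Proof. by move=> s0; rewrite -cs_real hF // cplx_neq0. Qed.

Lemma F_rot (t : R) z : F (z + t *: Jm z) = F z.
Proof. by rewrite -cs_rot hF // cplx_neq0 ?oner_eq0. Qed.

Lemma small_ne0 (t : R) : `|t| < 1 -> 1 + t != 0.
Proof.
move=> ht; apply/eqP => h; have : t = -1 by lra.
by move=> te; rewrite te normrN normr1 ltxx in ht.
Qed.

Lemma first_R (y : V) : y != 0 -> 'D_y F y = 0.
Proof.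
move=> y0.
have H : is_derive y y F ((fun _ : R => 0) 0).
  apply: (@exp_derive R V F y y (fun _ => 0)); last exact: cst_continuous.
  near=> t; rewrite mulr0 addr0 -{1}[y]scale1r -scalerDl F_real //.
  apply: small_ne0; near: t; exact: near_small.
by case: H.
Unshelve. all: by end_near. Qed.

Lemma first_J (y : V) : 'D_(Jm y) F y = 0.
Proof.
have H : is_derive y (Jm y) F ((fun _ : R => 0) 0).
  apply: (@exp_derive R V F y (Jm y) (fun _ => 0)); last exact: cst_continuous.
  by near=> t; rewrite mulr0 addr0 F_rot.
by case: H.
Unshelve. all: by end_near. Qed.


Lemma outer_R (x : V) (x0 : x != 0) b : 'D_x (pd b F) x = - pd b F x.
Proof.
have C := smooth_C1 sF; have Cb := smooth_C1pd b sF.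
have H : is_derive x x (pd b F) ((fun t : R => - pd b F (x + t *: x)) 0).
  apply: (@exp_derive R V (pd b F) x x (fun t => - pd b F (x + t *: x))).
  - near=> t.
    have t1 : 1 + t != 0 by apply: small_ne0; near: t; exact: near_small.
    have z0 : (1 + t) *: x != 0 by rewrite scaler_eq0 negb_or t1 x0.
    have hM : forall (h : R) (u w : V), (1 + t) *: (h *: u + w) = h *: ((1 + t) *: u) + (1 + t) *: w.
      by move=> h u w; rewrite scalerDr !scalerA mulrC.
    have hFM : forall z : V, F ((1 + t) *: z) = F z by move=> z; rewrite F_real.
    have E : pd b F x = (1 + t) * pd b F (x + t *: x).
      rewrite /pd (D_inv hM hFM) -[X in 'D_X _ _]addr0 (Dlin C z0) derive0 addr0.
      by rewrite scalerDl scale1r.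
    by rewrite E; ring.
  - have c3 : {for x, continuous (pd b F)} by case: (Cb x x0).
    exact: (cvgN (@cont_line R V (pd b F) x x c3)).
by case: H => _ ->; rewrite scale0r addr0.
Unshelve. all: by end_near. Qed.

Lemma outer_J (x : V) (x0 : x != 0) b b' (sg : R) :
  (forall z : V, z != 0 -> 'D_(Jm (ebasis R b)) F z = sg * pd b' F z) ->
  'D_(Jm x) (pd b F) x = - sg * pd b' F x.
Proof.
move=> hb.
have C := smooth_C1 sF.
have H : is_derive x (Jm x) (pd b F) ((fun t : R => - sg * pd b' F (x + t *: Jm x)) 0).
  apply: (@exp_derive R V (pd b F) x (Jm x) (fun t => - sg * pd b' F (x + t *: Jm x))).
  - have nn := @near_line R V x (Jm x) _ (nonzero_near x0).
    near=> t.
    have z0 : x + t *: Jm x != 0 by near: t.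
    have hM : forall (h : R) (u w : V), (h *: u + w) + t *: Jm (h *: u + w)
        = h *: (u + t *: Jm u) + (w + t *: Jm w).
      by move=> h u w; rewrite Jm_lin scalerDr scalerDr !scalerA mulrC; 
         rewrite !addrA; congr (_ + _); rewrite -!addrA; congr (_ + _); rewrite addrC.
    have hFM : forall z : V, F (z + t *: Jm z) = F z by move=> z; rewrite F_rot.
    have E : pd b F x = t * (sg * pd b' F (x + t *: Jm x)) + pd b F (x + t *: Jm x).
      by rewrite /pd (D_inv hM hFM) [ebasis R b + _]addrC (Dlin C z0) hb.
    by rewrite E; ring.
  - have c3 : {for x, continuous (pd b' F)} by case: (C x x0).
    apply: cvgM; first exact: cvg_cst.
    exact: (@cont_line R V (pd b' F) x (Jm x) c3).
by case: H => _ ->; rewrite scale0r addr0.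
Unshelve. all: by end_near. Qed.


Lemma inner_gen (L : V -> V) (hL : forall (h : R) u w, L (h *: u + w) = h *: L u + L w)
  (hE : forall y : V, y != 0 -> 'D_(L y) F y = 0) (x : V) (x0 : x != 0) c :
  \sum_k L x ord0 k * pd c (pd k F) x + 'D_(L (ebasis R c)) F x = 0.
Proof.
have C := smooth_C1 sF.
set E := \sum_(k < 3 + 3) ((fun y : V => L y ord0 k) * pd k F).
have Ey : forall y : V, y != 0 -> E y = 0.
  move=> y y0; rewrite /E fct_sumE; transitivity ('D_(L y) F y); last exact: hE y y0.
  by rewrite (C1_D C y0); apply: eq_bigr => k _.
have coordD : forall k, is_derive x (ebasis R c) (fun y : V => L y ord0 k)
    ((fun _ : R => L (ebasis R c) ord0 k) 0).
  move=> k; apply: (@exp_derive R V (fun y : V => L y ord0 k) x (ebasis R c)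
      (fun _ => L (ebasis R c) ord0 k)); last exact: cst_continuous.
  by near=> t; rewrite addrC hL !mxE addrC.
have HE : is_derive x (ebasis R c) E ((fun _ : R => 0) 0).
  apply: (@exp_derive R V E x (ebasis R c) (fun _ => 0)); last exact: cst_continuous.
  have nn := @near_line R V x (ebasis R c) _ (nonzero_near x0).
  near=> t; rewrite mulr0 addr0 (Ey x x0); apply: Ey; near: t; exact: nn.
have dE : 'D_(ebasis R c) E x = 0 by case: HE.
have dk : forall k, derivable (pd k F) x (ebasis R c).
  by move=> k; case: (smooth_C1pd k sF x0) => /(_ c).
rewrite /E derive_sum in dE; last first.
  by move=> k; apply: derivableM => //; case: (coordD k).
rewrite -[RHS]dE (C1_D C x0) -big_split; apply: eq_bigr => k _ /=.
rewrite deriveM; last exact: dk; last by case: (coordD k).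
have -> : 'D_(ebasis R c) (fun y : V => L y ord0 k) x = L (ebasis R c) ord0 k by case: (coordD k).
by rewrite /pd /= [X in _ = _ + X]mulrC.
Unshelve. all: by end_near. Qed.

End Setting.
Lemma alg_final (K : fieldType) (H00 H01 H02 H10 H11 H12 H20 H21 H22 z0 z1 z2 p0 p1 p2 : K) :
  (z0 * H00 + z1 * H10 + z2 * H20) = 0 ->
  (z0 * H01 + z1 * H11 + z2 * H21) = 0 ->
  (z0 * H02 + z1 * H12 + z2 * H22) = 0 ->
  (H00 * p0 + H01 * p1 + H02 * p2) = 0 ->
  (H10 * p0 + H11 * p1 + H12 * p2) = 0 ->
  (H20 * p0 + H21 * p1 + H22 * p2) = 0 ->
  (H00 - H11 - H22) = 0 ->
  (z0 * p0 - z1 * p1 - z2 * p2) = 0 ->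
  (z0  *  p0 != 0) \/ (z1  *  p1 != 0) \/ (z2  *  p2 != 0) ->
  (H00 * H00 - H01 * H10 - H02 * H20 - H10 * H01 + H11 * H11 + H12 * H21 - H20 * H02 + H21 * H12 + H22 * H22) = 0.
Proof.
move=> ho0 ho1 ho2 hi0 hi1 hi2 ht hn nz.
have E0 : z0  *  p0  *  (H00 * H00 - H01 * H10 - H02 * H20 - H10 * H01 + H11 * H11 + H12 * H21 - H20 * H02 + H21 * H12 + H22 * H22) = ((2) * H12 * p2 + (-2) * H22 * p1)  *  (z0 * H01 + z1 * H11 + z2 * H21) + ((-2) * H11 * p2 + (2) * H21 * p1)  *  (z0 * H02 + z1 * H12 + z2 * H22) + ((2) * H11 * z0 + (2) * H22 * z0)  *  (H00 * p0 + H01 * p1 + H02 * p2) + ((-2) * H01 * z0)  *  (H10 * p0 + H11 * p1 + H12 * p2) + ((-2) * H02 * z0)  *  (H20 * p0 + H21 * p1 + H22 * p2) + ((1) * H00 * z0 * p0 + (1) * H11 * z0 * p0 + (-2) * H11 * z1 * p1 + (-2) * H11 * z2 * p2 + (-1) * H22 * z0 * p0)  *  (H00 - H11 - H22) + ((-2) * H00 * H11 + (2) * H11 * H11 + (2) * H12 * H21)  *  (z0 * p0 - z1 * p1 - z2 * p2) by ring.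
rewrite ?ho0 ?ho1 ?ho2 ?hi0 ?hi1 ?hi2 ?ht ?hn in E0.
have E1 : z1  *  p1  *  (H00 * H00 - H01 * H10 - H02 * H20 - H10 * H01 + H11 * H11 + H12 * H21 - H20 * H02 + H21 * H12 + H22 * H22) = ((2) * H02 * p2)  *  (z0 * H00 + z1 * H10 + z2 * H20) + ((-2) * H22 * p1)  *  (z0 * H01 + z1 * H11 + z2 * H21) + ((-2) * H00 * p2 + (2) * H21 * p1)  *  (z0 * H02 + z1 * H12 + z2 * H22) + ((-2) * H10 * z1 + (2) * H22 * z0)  *  (H00 * p0 + H01 * p1 + H02 * p2) + ((2) * H00 * z1)  *  (H10 * p0 + H11 * p1 + H12 * p2) + ((-2) * H02 * z0)  *  (H20 * p0 + H21 * p1 + H22 * p2) + ((2) * H00 * z0 * p0 + (-1) * H00 * z1 * p1 + (-2) * H00 * z2 * p2 + (-1) * H11 * z1 * p1 + (-1) * H22 * z1 * p1)  *  (H00 - H11 - H22) + ((-2) * H00 * H00 + (2) * H00 * H11 + (2) * H02 * H20)  *  (z0 * p0 - z1 * p1 - z2 * p2) by ring.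
rewrite ?ho0 ?ho1 ?ho2 ?hi0 ?hi1 ?hi2 ?ht ?hn in E1.
have E2 : z2  *  p2  *  (H00 * H00 - H01 * H10 - H02 * H20 - H10 * H01 + H11 * H11 + H12 * H21 - H20 * H02 + H21 * H12 + H22 * H22) = ((-2) * H02 * p2)  *  (z0 * H00 + z1 * H10 + z2 * H20) + ((2) * H12 * p2)  *  (z0 * H01 + z1 * H11 + z2 * H21) + ((1) * H00 * p2 + (-1) * H11 * p2 + (1) * H22 * p2)  *  (z0 * H02 + z1 * H12 + z2 * H22) + ((1) * H00 * z0 + (2) * H10 * z1 + (1) * H11 * z0 + (-1) * H22 * z0)  *  (H00 * p0 + H01 * p1 + H02 * p2) + ((-1) * H00 * z1 + (-2) * H01 * z0 + (-1) * H11 * z1 + (-1) * H22 * z1)  *  (H10 * p0 + H11 * p1 + H12 * p2) + ((-1) * H00 * z0 * p0 + (1) * H00 * z2 * p2 + (-1) * H01 * z0 * p1 + (-1) * H10 * z1 * p0 + (-1) * H11 * z1 * p1 + (-1) * H11 * z2 * p2)  *  (H00 - H11 - H22) + ((-2) * H00 * H11 + (2) * H01 * H10)  *  (z0 * p0 - z1 * p1 - z2 * p2) by ring.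
rewrite ?ho0 ?ho1 ?ho2 ?hi0 ?hi1 ?hi2 ?ht ?hn in E2.
have F0 : forall a b c : K, a  *  b  *  c = 0 -> a  *  b != 0 -> c = 0.
  by move=> a b c /eqP; rewrite mulf_eq0 => /orP[->//|/eqP ->].
case: nz => [nz|[nz|nz]]; apply: F0 nz.
- by rewrite E0; ring.
- by rewrite E1; ring.
- by rewrite E2; ring.
Qed.

Lemma sum3 (K : zmodType) (G : 'I_3 -> K) : \sum_(i < 3) G i = G 0 + G 1 + G 2.
Proof. rewrite !big_ord_recr big_ord0 /= add0r; congr (G _ + G _ + G _); by apply: val_inj. Qed.

Lemma sum6 (K : zmodType) (G : 'I_(3 + 3) -> K) :
  \sum_(k < 3 + 3) G k = G (re 0) + G (re 1) + G (re 2) + (G (im 0) + G (im 1) + G (im 2)).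
Proof. by rewrite big_split_ord /= !sum3. Qed.

Lemma hess_exp (R : realType) (Hf : 'I_3 -> 'I_3 -> R[i]) :
  \sum_(I < 3) \sum_(J < 3) \sum_(K < 3) \sum_(L < 3)
    ginv R I L * ginv R K J * Hf I J * Hf K L =
  Hf 0 0 * Hf 0 0 - Hf 0 1 * Hf 1 0 - Hf 0 2 * Hf 2 0 - Hf 1 0 * Hf 0 1 + Hf 1 1 * Hf 1 1
  + Hf 1 2 * Hf 2 1 - Hf 2 0 * Hf 0 2 + Hf 2 1 * Hf 1 2 + Hf 2 2 * Hf 2 2.
Proof.
rewrite !sum3 /ginv /=. ring.
Qed.

Lemma zp_ne0 (R : realType) (a b : R) : a != 0 \/ b != 0 -> Complex a b * Complex a (- b) != 0.
Proof.
move=> hab; rewrite eq_complex /= negb_and; apply/orP; left.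
rewrite (_ : a * a - b * - b = a ^+ 2 + b ^+ 2); last by ring.
rewrite paddr_eq0 ?sqr_ge0 // !sqrf_eq0 negb_and.
by case: hab => ->; rewrite ?orbT.
Qed.

Lemma final_alg (R : realType) (X JX : 'I_(3 + 3) -> R) (D : 'I_(3 + 3) -> 'I_(3 + 3) -> R)
  (g : 'I_(3 + 3) -> R) :
  (forall I, JX (re I) = - X (im I)) -> (forall I, JX (im I) = X (re I)) ->
  (forall b, \sum_k X k * D k b = - g b) ->
  (forall I, \sum_k JX k * D k (re I) = - g (im I)) ->
  (forall I, \sum_k JX k * D k (im I) = g (re I)) ->
  (forall c, \sum_k X k * D c k + g c = 0) ->
  (forall I, \sum_k JX k * D (re I) k + g (im I) = 0) ->
  (forall I, \sum_k JX k * D (im I) k - g (re I) = 0) ->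
  let H := fun I J : 'I_3 => Complex ((D (re I) (re J) + D (im I) (im J)) / 4)
                              ((D (re I) (im J) - D (im I) (re J)) / 4) in
  H 0 0 - H 1 1 - H 2 2 = 0 ->
  (X (re 0) ^+ 2 + X (im 0) ^+ 2) - (X (re 1) ^+ 2 + X (im 1) ^+ 2)
     - (X (re 2) ^+ 2 + X (im 2) ^+ 2) = 0 ->
  (exists k, X k != 0) ->
  H 0 0 * H 0 0 - H 0 1 * H 1 0 - H 0 2 * H 2 0 - H 1 0 * H 0 1 + H 1 1 * H 1 1
  + H 1 2 * H 2 1 - H 2 0 * H 0 2 + H 2 1 * H 1 2 + H 2 2 * H 2 2 = 0.
Proof.
move=> JXre JXim OR OJre OJim IR IJre IJim H Tr Lx [k nz].
move/eqP: (Tr); rewrite eq_complex /H /= => /andP[/eqP tr1 /eqP tr2].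
have q1 := OR (re 0); rewrite sum6  in q1.
have q2 := IR (re 0); rewrite sum6  in q2.
have q3 := OR (re 1); rewrite sum6  in q3.
have q4 := IR (re 1); rewrite sum6  in q4.
have q5 := OR (re 2); rewrite sum6  in q5.
have q6 := IR (re 2); rewrite sum6  in q6.
have q7 := OR (im 0); rewrite sum6  in q7.
have q8 := IR (im 0); rewrite sum6  in q8.
have q9 := OR (im 1); rewrite sum6  in q9.
have q10 := IR (im 1); rewrite sum6  in q10.
have q11 := OR (im 2); rewrite sum6  in q11.
have q12 := IR (im 2); rewrite sum6  in q12.
have q13 := OJre 0; rewrite sum6 ?JXre ?JXim in q13.
have q14 := OJim 0; rewrite sum6 ?JXre ?JXim in q14.
have q15 := IJre 0; rewrite sum6 ?JXre ?JXim in q15.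
have q16 := IJim 0; rewrite sum6 ?JXre ?JXim in q16.
have q17 := OJre 1; rewrite sum6 ?JXre ?JXim in q17.
have q18 := OJim 1; rewrite sum6 ?JXre ?JXim in q18.
have q19 := IJre 1; rewrite sum6 ?JXre ?JXim in q19.
have q20 := IJim 1; rewrite sum6 ?JXre ?JXim in q20.
have q21 := OJre 2; rewrite sum6 ?JXre ?JXim in q21.
have q22 := OJim 2; rewrite sum6 ?JXre ?JXim in q22.
have q23 := IJre 2; rewrite sum6 ?JXre ?JXim in q23.
have q24 := IJim 2; rewrite sum6 ?JXre ?JXim in q24.
apply: (@alg_final _ _ _ _ _ _ _ _ _ _ (Complex (X (re 0)) (X (im 0)))
   (Complex (X (re 1)) (X (im 1))) (Complex (X (re 2)) (X (im 2)))
   (Complex (X (re 0)) (- X (im 0)))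
   (Complex (X (re 1)) (- X (im 1)))
   (Complex (X (re 2)) (- X (im 2)))).
all: try (apply/eqP; rewrite eq_complex /H /=; apply/andP; split; apply/eqP).
all: try (clear Tr; lra).
move: nz; rewrite -(splitK k); case: (fintype.split k) => I /= nzI.
  have hI : X (re I) != 0 \/ X (im I) != 0 by left.
  case: I nzI hI => [[|[|[|m]]] Hm] nzI hI //.
  - by left; apply: zp_ne0; move: hI; congr (_ \/ _); congr (X _ != 0); apply: val_inj.
  - by right; left; apply: zp_ne0; move: hI; congr (_ \/ _); congr (X _ != 0); apply: val_inj.
  - by right; right; apply: zp_ne0; move: hI; congr (_ \/ _); congr (X _ != 0); apply: val_inj.
have hI : X (re I) != 0 \/ X (im I) != 0 by right.
case: I nzI hI => [[|[|[|m]]] Hm] nzI hI //.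
- by left; apply: zp_ne0; move: hI; congr (_ \/ _); congr (X _ != 0); apply: val_inj.
- by right; left; apply: zp_ne0; move: hI; congr (_ \/ _); congr (X _ != 0); apply: val_inj.
- by right; right; apply: zp_ne0; move: hI; congr (_ \/ _); congr (X _ != 0); apply: val_inj.
Qed.

Close Scope complex_scope.
Close Scope classical_set_scope.

Theorem mainTheorem7 (R : realType) (f ft : 'rV[R]_(3 + 3) -> R) :
  in_E f -> harmonic_extension f ft ->
  forall x : 'rV[R]_(3 + 3), Ncone x -> hess11_norm2 ft x = 0.
Proof.
move=> _ [sF hF _ [h [_ hD]]] x [x0 Lx].
have C := smooth_C1 sF.
have OR : forall b, \sum_k x ord0 k * pd k (pd b ft) x = - pd b ft x.
  by move=> b; rewrite -(outer_R sF hF x0 b) (C1_D (smooth_C1pd b sF) x0).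
have OJre : forall I, \sum_k Jm x ord0 k * pd k (pd (re I) ft) x = - pd (im I) ft x.
  move=> I; rewrite -(C1_D (smooth_C1pd (re I) sF) x0).
  rewrite (@outer_J R ft sF hF x x0 (re I) (im I) 1) ?mulN1r ?mul1r //.
  by move=> z z0; rewrite Jm_e_re mul1r.
have OJim : forall I, \sum_k Jm x ord0 k * pd k (pd (im I) ft) x = pd (re I) ft x.
  move=> I; rewrite -(C1_D (smooth_C1pd (im I) sF) x0).
  rewrite (@outer_J R ft sF hF x x0 (im I) (re I) (-1)) ?mulN1r ?opprK ?mul1r //.
  by move=> z z0; rewrite Jm_e_im (Dopp C z0) mulN1r.
have IR : forall c, \sum_k x ord0 k * pd c (pd k ft) x + pd c ft x = 0.
  move=> c; have := (@inner_gen R ft sF (fun y => y) (fun _ _ _ => erefl)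
     (fun y y0 => first_R hF y0) x x0 c).
  by [].
have IJre : forall I, \sum_k Jm x ord0 k * pd (re I) (pd k ft) x + pd (im I) ft x = 0.
  move=> I; have := @inner_gen R ft sF (@Jm R) (@Jm_lin R) (fun y _ => @first_J R ft hF y) x x0 (re I).
  by rewrite Jm_e_re.
have IJim : forall I, \sum_k Jm x ord0 k * pd (im I) (pd k ft) x - pd (re I) ft x = 0.
  move=> I; have := @inner_gen R ft sF (@Jm R) (@Jm_lin R) (fun y _ => @first_J R ft hF y) x x0 (im I).
  by rewrite Jm_e_im (Dopp C x0).
have Tr : Delta ft x = 0 by rewrite hD // Lx mul0r.
have nzex : exists k, x ord0 k != 0.
  case: (pselect (exists k, x ord0 k != 0)) => // hn.
  move/negP: x0 => x0; exfalso; apply: x0; apply/eqP/rowP => k; rewrite mxE.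
  apply/eqP; apply/negP => hk; apply: hn; exists k; apply/negP; exact: hk.
have := @final_alg R (fun k => x ord0 k) (fun k => Jm x ord0 k) (fun a b => pd a (pd b ft) x)
  (fun a => pd a ft x) (Jm_re x) (Jm_im x) OR OJre OJim IR IJre IJim Tr Lx nzex.
move=> E; rewrite /hess11_norm2 (hess_exp (fun I J => ddbar I J ft x)).
exact: E.
Qed.
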